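(* Let $Q=\Diamond abcd$ be a convex quadrilateral with vertices $a,b,c,d$ in clockwise order, such that the diagonal $\overline{ac}$ is horizontal, $|ac|=1$, and $1$ is the diameter of $Q$. Let the smallest axis-parallel rectangle containing $Q$ have horizontal side length $1$ and vertical side length $W$ with $0<W\le 1$, with $a$ on its left side, $b$ on its top side, $c$ on its right side and $d$ on its bottom side. Let $r=\frac14\sqrt{1+4W^2}$. Assume $|ab|\ge \frac{\sqrt{1+W^2}}{2}$. If one of the edges adjacent to $\overline{ab}$ (namely $\overline{bc}$ or $\overline{ad}$) has length at least $\frac{\sqrt{1+W^2}}{2}$ and $W\ge \frac{1}{\sqrt3}$, then $r\le 1.6\, r_{opt}(Q)$.
   Context: For a compact set $X\subset\mathbb{R}^2$, $r_{opt}(X)$ denotes the minimum $r$ such that two closed disks of radius $r$ have union containing $X$. *)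

(* Defs.v *)
From Stdlib Require Import Reals Lra.
From Coquelicot Require Import Coquelicot.
Open Scope R_scope.

Definition point := (R * R)%type.

Definition dist2 (p q : point) : R :=
  sqrt ((fst p - fst q) ^ 2 + (snd p - snd q) ^ 2).

(* cross product of (q - p) and (s - q): orientation of the turn p -> q -> s;
   negative = clockwise turn *)
Definition orient (p q s : point) : R :=
  (fst q - fst p) * (snd s - snd q) - (snd q - snd p) * (fst s - fst q).

Definition quad (a b c d : point) (p : point) : Prop :=
  exists ta tb tc td : R,
    0 <= ta /\ 0 <= tb /\ 0 <= tc /\ 0 <= td /\ ta + tb + tc + td = 1 /\
    fst p = ta * fst a + tb * fst b + tc * fst c + td * fst d /\
    snd p = ta * snd a + tb * snd b + tc * snd c + td * snd d.

Definition disk (z : point) (r : R) (p : point) : Prop := dist2 z p <= r.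

Definition two_disk_cover (X : point -> Prop) (r : R) : Prop :=
  exists z1 z2 : point, forall p, X p -> disk z1 r p \/ disk z2 r p.

Definition r_opt (X : point -> Prop) : R := real (Glb_Rbar (two_disk_cover X)).

(* Main.v *)
Require Import Defs.
From Stdlib Require Import Reals Lra Rgeom.
From Coquelicot Require Import Coquelicot.
Open Scope R_scope.

Lemma pow2_sqr (x : R) : x ^ 2 = Rsqr x.
Proof. unfold Rsqr; ring. Qed.

Lemma dist2_tri p q z : dist2 p q <= dist2 p z + dist2 z q.
Proof. unfold dist2; rewrite !pow2_sqr; apply triangle. Qed.

Lemma dist2_sym p q : dist2 p q = dist2 q p.
Proof. unfold dist2; f_equal; ring. Qed.

Lemma same_disk p q z r s : s <= dist2 p q -> disk z r p -> disk z r q -> s / 2 <= r.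
Proof.
  unfold disk; intros H1 H2 H3.
  pose proof (dist2_tri p q z). rewrite (dist2_sym p z) in H. lra.
Qed.

Lemma three_pts (X : point -> Prop) p q x s r :
  X p -> X q -> X x -> s <= dist2 p q -> s <= dist2 p x -> s <= dist2 q x ->
  two_disk_cover X r -> s / 2 <= r.
Proof.
  intros Hp Hq Hx H1 H2 H3 [z1 [z2 Hc]].
  destruct (Hc p Hp) as [A|A]; destruct (Hc q Hq) as [B|B];
  destruct (Hc x Hx) as [C|C];
  first [ eapply (same_disk p q); eassumption
        | eapply (same_disk p x); eassumption
        | eapply (same_disk q x); eassumption ].
Qed.

Lemma ropt_ge (X : point -> Prop) s r0 :
  two_disk_cover X r0 -> (forall r, two_disk_cover X r -> s <= r) -> s <= r_opt X.
Proof.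
  intros H0 Hlb. unfold r_opt.
  destruct (Glb_Rbar_correct (two_disk_cover X)) as [Hl Hg].
  assert (A : Rbar_le s (Glb_Rbar (two_disk_cover X))).
  { apply Hg. intros x Hx. simpl. apply Hlb; auto. }
  assert (B : Rbar_le (Glb_Rbar (two_disk_cover X)) r0) by (apply Hl; auto).
  destruct (Glb_Rbar (two_disk_cover X)); simpl in *; auto; contradiction.
Qed.

Lemma quad_a a b c d : quad a b c d a.
Proof. exists 1, 0, 0, 0; repeat split; simpl; try lra; ring. Qed.
Lemma quad_b a b c d : quad a b c d b.
Proof. exists 0, 1, 0, 0; repeat split; simpl; try lra; ring. Qed.
Lemma quad_c a b c d : quad a b c d c.
Proof. exists 0, 0, 1, 0; repeat split; simpl; try lra; ring. Qed.
Lemma quad_d a b c d : quad a b c d d.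
Proof. exists 0, 0, 0, 1; repeat split; simpl; try lra; ring. Qed.

Theorem lemma5 (a b c d : point) (W : R) :
  (* convex quadrilateral, vertices in clockwise order *)
  orient a b c < 0 -> orient b c d < 0 -> orient c d a < 0 -> orient d a b < 0 ->
  (* diagonal ac horizontal, |ac| = 1 *)
  snd a = snd c -> dist2 a c = 1 ->
  (* the diameter of Q is 1 *)
  (forall p q, quad a b c d p -> quad a b c d q -> dist2 p q <= 1) ->
  (* smallest axis-parallel bounding rectangle: [fst a, fst c] x [snd d, snd b],
     width 1, height W; a on left, b on top, c on right, d on bottom side *)
  (forall p, quad a b c d p ->
     fst a <= fst p /\ fst p <= fst c /\ snd d <= snd p /\ snd p <= snd b) ->
  fst c - fst a = 1 -> snd b - snd d = W ->
  0 < W -> W <= 1 ->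
  dist2 a b >= sqrt (1 + W ^ 2) / 2 ->
  (dist2 b c >= sqrt (1 + W ^ 2) / 2 \/ dist2 a d >= sqrt (1 + W ^ 2) / 2) ->
  W >= 1 / sqrt 3 ->
  sqrt (1 + 4 * W ^ 2) / 4 <= (8 / 5) * r_opt (quad a b c d).
Proof.
  intros _ _ _ _ Hac Hac1 Hdiam Hbox Hw HW W0 W1 Hab Hor HW3.
  set (s := sqrt (1 + W ^ 2) / 2).
  assert (Hs1 : s <= 1).
  { unfold s. assert (sqrt (1 + W^2) <= sqrt 4).
    { apply sqrt_le_1_alt. nra. }
    assert (sqrt 4 = 2). { replace 4 with (2*2) by ring. apply sqrt_square; lra. }
    lra. }
  assert (HsW : s <= W).
  { unfold s.
    assert (H3 : 0 < sqrt 3) by (apply sqrt_lt_R0; lra).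
    assert (H33 : sqrt 3 * sqrt 3 = 3) by (apply sqrt_sqrt; lra).
    assert (HW2 : 3 * W ^ 2 >= 1).
    { assert (W * sqrt 3 >= 1).
      { apply Rmult_ge_compat_r with (r := sqrt 3) in HW3; [|lra].
        unfold Rdiv in HW3. rewrite Rmult_assoc, Rinv_l in HW3; lra. }
      nra. }
    assert (sqrt (1 + W^2) <= sqrt ((2*W)*(2*W))) by (apply sqrt_le_1_alt; nra).
    rewrite sqrt_square in H; lra. }
  assert (Hbd : W <= dist2 b d).
  { unfold dist2. rewrite <- (sqrt_pow2 W) by lra. apply sqrt_le_1_alt.
    rewrite HW. pose proof (pow2_ge_0 (fst b - fst d)). lra. }
  assert (Hlow : s / 2 <= r_opt (quad a b c d)).
  { apply ropt_ge with (r0 := 1).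
    - exists a, a. intros p Hp. left. unfold disk. apply Hdiam; auto. apply quad_a.
    - intros r Hr. destruct Hor as [Hbc|Had].
      + apply (three_pts (quad a b c d) a b c s r); auto using quad_a, quad_b, quad_c;
        unfold s in *; lra.
      + apply (three_pts (quad a b c d) a b d s r); auto using quad_a, quad_b, quad_d;
        unfold s in *; lra. }
  assert (Hfin : sqrt (1 + 4 * W ^ 2) <= 8/5 * sqrt (1 + W^2)).
  { assert (0 <= sqrt (1 + W^2)) by apply sqrt_pos.
    rewrite <- (sqrt_square (8/5 * sqrt (1 + W^2))) by nra.
    apply sqrt_le_1_alt.
    assert (sqrt (1 + W ^ 2) * sqrt (1 + W ^ 2) = 1 + W^2) by (apply sqrt_sqrt; nra).
    nra. }
  unfold s in Hlow. lra.
Qed.
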